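(* If $\mu\in\Pr(\mathbb{T})$ satisfies $\mu\,\hat{}\,\mu=\mu$, then $\mu$ is $F$-invariant.
   Context: For $a,b\subseteq(0,1]$ put $a\,\hat{}\,b=\tfrac12 a\cup\tfrac12(b+1)$; $\mathbb{T}$ is the set generated from $\mathbf{1}=\{1\}$ by $\hat{}$ (the free binary system on one generator; each $t\neq\mathbf{1}$ is uniquely $a\,\hat{}\,b$). $\Pr(\mathbb{T})$ is the set of finitely additive probability measures on $\mathbb{T}$ (viewed as positive normalized functionals on $\ell^\infty(\mathbb{T})$), and $(\mu\,\hat{}\,\nu)(f)=\int\int f(x\,\hat{}\,y)\,d\nu(y)\,d\mu(x)$. Thompson's group $F$ has generators $x_0,x_1$ which act partially on $\mathbb{T}$ by re-association: $x_0\cdot((a\,\hat{}\,b)\,\hat{}\,c)=a\,\hat{}\,(b\,\hat{}\,c)$, defined exactly on elements of the form $(a\,\hat{}\,b)\,\hat{}\,c$, and $x_1\cdot(s\,\hat{}\,((a\,\hat{}\,b)\,\hat{}\,c))=s\,\hat{}\,(a\,\hat{}\,(b\,\hat{}\,c))$, defined exactly on elements of the form $s\,\hat{}\,((a\,\hat{}\,b)\,\hat{}\,c)$. For $E\subseteq\mathbb{T}$, $x_i\cdot E=\{x_i\cdot t: t\in E,\ x_i\cdot t \text{ defined}\}$. A measure $\mu\in\Pr(\mathbb{T})$ is $F$-invariant if $\mu(\{t:x_0\cdot t\text{ and }x_1\cdot t\text{ are defined}\})=1$ and $\mu(x_0\cdot E)=\mu(x_1\cdot E)=\mu(E)$ for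 every $E\subseteq\mathbb{T}$. *)

(* Defs.v *)
From Stdlib Require Import Reals ClassicalEpsilon.
Open Scope R_scope.

(* The free binary system on one generator: binary trees.
   [leaf] is the generator 1, [node a b] is a ^ b. *)
Inductive tree : Type :=
| leaf : tree
| node : tree -> tree -> tree.

Definition bounded_fn (f : tree -> R) : Prop :=
  exists M, forall t, Rabs (f t) <= M.

(* A finitely additive probability measure on T, viewed as a positive,
   normalized linear functional on l^infty(T). *)
Definition is_mean (mu : (tree -> R) -> R) : Prop :=
  (forall f g, bounded_fn f -> bounded_fn g ->
     mu (fun t => f t + g t) = mu f + mu g) /\
  (forall (c : R) f, bounded_fn f -> mu (fun t => c * f t) = c * mu f) /\
  (forall f, bounded_fn f -> (forall t, 0 <= f t) -> 0 <= mu f) /\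
  mu (fun _ => 1) = 1.

Definition conv (mu nu : (tree -> R) -> R) : (tree -> R) -> R :=
  fun f => mu (fun x => nu (fun y => f (node x y))).

Definition indicator (E : tree -> Prop) : tree -> R :=
  fun t => if excluded_middle_informative (E t) then 1 else 0.

Definition measure_of (mu : (tree -> R) -> R) (E : tree -> Prop) : R :=
  mu (indicator E).

(* partial actions of the generators x0, x1 of Thompson's group F *)
Definition act_x0 (t : tree) : option tree :=
  match t with
  | node (node a b) c => Some (node a (node b c))
  | _ => None
  end.

Definition act_x1 (t : tree) : option tree :=
  match t with
  | node s (node (node a b) c) => Some (node s (node a (node b c)))
  | _ => None
  end.

Definition act_set (x : tree -> option tree) (E : tree -> Prop) : tree -> Prop :=
  fun u => exists t, E t /\ x t = Some u.

Definition F_invariant (mu : (tree -> R) -> R) : Prop :=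
  measure_of mu (fun t => act_x0 t <> None /\ act_x1 t <> None) = 1 /\
  (forall E : tree -> Prop,
     measure_of mu (act_set act_x0 E) = measure_of mu E /\
     measure_of mu (act_set act_x1 E) = measure_of mu E).

(* Main.v *)
Require Import Defs.
From Stdlib Require Import Reals Lra FunctionalExtensionality ClassicalEpsilon.
Open Scope R_scope.

Section S.
Variable mu : (tree -> R) -> R.
Hypothesis Hm : is_mean mu.

Lemma mu_const c : mu (fun _ => c) = c.
Proof.
  destruct Hm as (_ & Hs & _ & H1).
  replace (fun _ : tree => c) with (fun t : tree => c * (fun _ => 1) t)
    by (apply functional_extensionality; intros; simpl; ring).
  rewrite Hs. rewrite H1; ring. exists 1; intros; rewrite Rabs_R1; lra.
Qed.

Lemma mu_bound f M : (forall t, Rabs (f t) <= M) -> Rabs (mu f) <= M.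
Proof.
  intros Hf.
  destruct Hm as (Ha & Hs & Hp & H1).
  assert (Bf : bounded_fn f) by (exists M; auto).
  assert (Bc : bounded_fn (fun _ => M)) by (exists (Rabs M); intros; lra).
  assert (Bn : bounded_fn (fun t => -1 * f t)).
  { exists M; intros t. replace (-1 * f t) with (- f t) by ring. rewrite Rabs_Ropp. auto. }
  assert (P1 := Hp (fun t => M + f t)).
  assert (P2 := Hp (fun t => M + -1 * f t)).
  rewrite Ha in P1 by auto. rewrite Ha in P2 by auto.
  rewrite Hs in P2 by auto. rewrite mu_const in P1, P2.
  apply Rabs_le.
  assert (0 <= M + mu f).
  { apply P1. exists (M + M). intros t. specialize (Hf t).
    assert (0 <= Rabs (f t)) by apply Rabs_pos.
    apply Rabs_le. pose proof (Rle_abs (f t)) as K1. pose proof (Rle_abs (- f t)) as K2.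
    rewrite Rabs_Ropp in K2. split; lra.
    intros t. specialize (Hf t). pose proof (Rle_abs (- f t)) as K. rewrite Rabs_Ropp in K. lra. }
  assert (0 <= M + -1 * mu f).
  { apply P2. exists (M + M). intros t. specialize (Hf t).
    assert (0 <= Rabs (f t)) by apply Rabs_pos.
    apply Rabs_le. pose proof (Rle_abs (f t)) as K1. pose proof (Rle_abs (- f t)) as K2.
    rewrite Rabs_Ropp in K2. split; lra.
    intros t. specialize (Hf t). pose proof (Rle_abs (f t)). lra. }
  split; lra.
Qed.

Hypothesis Hid : forall f : tree -> R, bounded_fn f -> conv mu mu f = mu f.

Lemma E2 g M : (forall t, Rabs (g t) <= M) ->
  mu g = mu (fun x => mu (fun y => g (node x y))).
Proof. intros Hg. rewrite <- (Hid g) by (exists M; auto). reflexivity. Qed.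

Lemma E3 g M : (forall t, Rabs (g t) <= M) ->
  mu g = mu (fun a => mu (fun b => mu (fun c => g (node (node a b) c)))).
Proof.
  intros Hg. rewrite (E2 g M Hg).
  apply (E2 (fun x => mu (fun y => g (node x y))) M).
  intros t. apply mu_bound. auto.
Qed.

Lemma E3' g M : (forall t, Rabs (g t) <= M) ->
  mu g = mu (fun a => mu (fun b => mu (fun c => g (node a (node b c))))).
Proof.
  intros Hg. rewrite (E2 g M Hg). f_equal. apply functional_extensionality; intro a.
  apply (E2 (fun y => g (node a y)) M). auto.
Qed.

Lemma ind_bound E t : Rabs (indicator E t) <= 1.
Proof.
  unfold indicator; destruct excluded_middle_informative;
  [rewrite Rabs_R1 | rewrite Rabs_R0]; lra.
Qed.

Lemma ind_iff (E1 E2 : tree -> Prop) t1 t2 : (E1 t1 <-> E2 t2) ->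
  indicator E1 t1 = indicator E2 t2.
Proof.
  intros H; unfold indicator; do 2 destruct excluded_middle_informative; tauto.
Qed.

End S.

Theorem proposition3p3 (mu : (tree -> R) -> R) :
  is_mean mu ->
  (forall f : tree -> R, bounded_fn f -> conv mu mu f = mu f) ->
  F_invariant mu.
Proof.
  intros Hm Hid. split.
  - unfold measure_of.
    set (S := fun t => act_x0 t <> None /\ act_x1 t <> None).
    rewrite (E3 mu Hm Hid _ 1 (ind_bound S)).
    transitivity (mu (fun _ => 1)).
    2: { destruct Hm as (_&_&_&H); exact H. }
    f_equal; apply functional_extensionality; intro u.
    transitivity (mu (fun _ => 1)). 2: apply mu_const; auto.
    f_equal; apply functional_extensionality; intro v.
    rewrite (E3 mu Hm Hid (fun c => indicator S (node (node u v) c)) 1 (fun t => ind_bound S _)).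
    transitivity (mu (fun _ => 1)). 2: apply mu_const; auto.
    f_equal; apply functional_extensionality; intro a.
    transitivity (mu (fun _ => 1)). 2: apply mu_const; auto.
    f_equal; apply functional_extensionality; intro b.
    transitivity (mu (fun _ => 1)). 2: apply mu_const; auto.
    f_equal; apply functional_extensionality; intro c.
    unfold indicator; destruct excluded_middle_informative as [|n]; auto.
    exfalso; apply n; unfold S; simpl; split; discriminate.
  - intros E; unfold measure_of; split.
    + rewrite (E3' mu Hid _ 1 (ind_bound _)).
      rewrite (E3 mu Hm Hid _ 1 (ind_bound E)).
      f_equal; apply functional_extensionality; intro a.
      f_equal; apply functional_extensionality; intro b.
      f_equal; apply functional_extensionality; intro c.
      apply ind_iff. unfold act_set; split.
      * intros [t [Ht Hx]]. destruct t as [|[|t1 t2] t3]; simpl in Hx; try discriminate.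
        injection Hx; intros; subst; auto.
      * intros H; exists (node (node a b) c); auto.
    + rewrite (E2 mu Hid _ 1 (ind_bound _)).
      rewrite (E2 mu Hid _ 1 (ind_bound E)).
      f_equal; apply functional_extensionality; intro s.
      rewrite (E3' mu Hid _ 1 (fun t => ind_bound _ _)).
      rewrite (E3 mu Hm Hid (fun y => indicator E (node s y)) 1 (fun t => ind_bound _ _)).
      f_equal; apply functional_extensionality; intro a.
      f_equal; apply functional_extensionality; intro b.
      f_equal; apply functional_extensionality; intro c.
      apply ind_iff. unfold act_set; split.
      * intros [t [Ht Hx]]. destruct t as [|t0 [|[|t1 t2] t3]]; simpl in Hx; try discriminate.
        injection Hx; intros; subst; auto.
      * intros H; exists (node s (node (node a b) c)); auto.
Qed.
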